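(* Multi-winner approval voting (AV) is the only Thiele rule (for the fixed $m$ and $k$) that satisfies the excellence criterion.
   Context: Let $\mathcal C=\{c_1,\dots,c_m\}$ ($m\ge2$) be the candidates, $\mathcal A$ the set of non-empty subsets of $\mathcal C$ (ballots), and a profile a map $A:N_A\to\mathcal A$ from a non-empty finite set of voters $N_A\subseteq\mathbb N$. Fix $k\in\{1,\dots,m-1\}$, and let $\mathcal W_k$ be the set of $k$-element subsets of $\mathcal C$ (committees). An ABC voting rule maps each profile to a non-empty subset of $\mathcal W_k$. A Thiele rule is an ABC voting rule for which there is a non-decreasing $s:\{0,\dots,k\}\to\mathbb R$ with $s(0)=0$ such that $f(A)$ is the set of committees $W$ maximizing $\sum_{i\in N_A}s(|A_i\cap W|)$. AV is the Thiele rule with $s(x)=x$. A profile $A$ is a party-list profile if there is a partition $\mathcal P_A=\{P_1,\dots,P_\ell\}$ of $\mathcal C$ such that every voter's ballot equals some $P_j$; $n_j$ denotes the number of voters whose ballot is $P_j$. An ABC voting rule $f$ satisfies the excellence criterion if for all party-list profiles $A$, all $W\in f(A)$, and all parties $P_i,P_j\in\mathcal P_A$ with $n_i<n_j$, $P_i\subseteq W$ implies $P_j\subseteq W$. *)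

(* Defs.v *)
From mathcomp Require Import all_boot all_order all_algebra finmap.
From mathcomp Require Import Rstruct.
Set Implicit Arguments. Unset Strict Implicit. Unset Printing Implicit Defensive.
Import Order.TTheory GRing.Theory Num.Theory.
Local Open Scope fset_scope.
Local Open Scope ring_scope.

Record profile (m : nat) := Profile {
  voters : {fset nat};
  ballot : voters -> {set 'I_m};
  voters_nonempty : voters != fset0;
  ballot_nonempty : forall i : voters, ballot i != set0 }.

Definition rule (m : nat) := profile m -> {set {set 'I_m}}.

Definition abc_rule (m k : nat) (f : rule m) : Prop :=
  forall A : profile m, f A != set0 /\ forall W, W \in f A -> #|W| = k.

Definition thiele_score (m : nat) (s : nat -> Rdefinitions.R) (A : profile m)
    (W : {set 'I_m}) : Rdefinitions.R :=
  \sum_(i : voters A) s #|ballot i :&: W|.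

Definition thiele_outcome (m k : nat) (s : nat -> Rdefinitions.R) (A : profile m)
    : {set {set 'I_m}} :=
  [set W : {set 'I_m} | (#|W| == k) &&
     [forall W' : {set 'I_m}, (#|W'| == k) ==>
        (thiele_score s A W' <= thiele_score s A W)]].

(* f is a Thiele rule: an ABC rule given by some non-decreasing
   s : {0..k} -> R with s 0 = 0 (values of s beyond k are irrelevant). *)
Definition is_thiele_rule (m k : nat) (f : rule m) : Prop :=
  abc_rule k f /\
  exists s : nat -> Rdefinitions.R,
    s 0%N = 0 /\
    (forall x y : nat, (x <= y <= k)%N -> s x <= s y) /\
    forall A : profile m, f A = thiele_outcome k s A.

Definition AV (m k : nat) : rule m :=
  fun A => thiele_outcome k (fun x : nat => x%:R) A.
Arguments AV : clear implicits.

Definition party_list_wrt (m : nat) (A : profile m) (P : {set {set 'I_m}}) :=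
  partition P [set: 'I_m] /\ forall i : voters A, ballot i \in P.

Definition party_support (m : nat) (A : profile m) (Pj : {set 'I_m}) : nat :=
  #|[set i : voters A | ballot i == Pj]|.

Definition excellence (m : nat) (f : rule m) : Prop :=
  forall (A : profile m) (P : {set {set 'I_m}}), party_list_wrt A P ->
  forall W, W \in f A ->
  forall Pi Pj, Pi \in P -> Pj \in P ->
    (party_support A Pi < party_support A Pj)%N ->
    Pi \subset W -> Pj \subset W.

(* Main.v *)
Require Import Defs.
From mathcomp Require Import all_boot all_order all_algebra finmap.
From mathcomp Require Import Rstruct zify ring lra.
Import Order.TTheory GRing.Theory Num.Theory.
Set Implicit Arguments. Unset Strict Implicit. Unset Printing Implicit Defensive.

Section Build.
Local Open Scope ring_scope.
Variables (m : nat) (lab : 'I_m -> nat) (v : 'I_m -> nat) (x0 : 'I_m).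

Definition bxs : seq 'I_m := flatten [seq nseq (v c) c | c <- enum 'I_m].
Definition blk (x : 'I_m) : {set 'I_m} := [set y in [set: 'I_m] | lab x == lab y].
Definition bvoters : {fset nat} := seq_fset tt (iota 0 (size bxs)).
Definition bballot (i : bvoters) : {set 'I_m} := blk (nth x0 bxs (val i)).

Lemma blk_self x : x \in blk x.
Proof. by rewrite /blk !inE eqxx. Qed.

Lemma bballot_ne i : bballot i != set0.
Proof. by apply/set0Pn; exists (nth x0 bxs (val i)); apply: blk_self. Qed.

Lemma bxs_pos c : (0 < v c)%N -> (0 < size bxs)%N.
Proof.
move=> h; have : c \in bxs.
  by apply/flatten_mapP; exists c; rewrite ?mem_enum // mem_nseq h eqxx.
by case: bxs.
Qed.

Hypothesis hv : (0 < size bxs)%N.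

Lemma bvoters_ne : bvoters != fset0.
Proof.
apply/eqP => h. have : (0%N \in bvoters) by rewrite seq_fsetE mem_iota add0n hv.
by rewrite h inE.
Qed.

Definition bprof : profile m := @Profile m bvoters bballot bvoters_ne bballot_ne.

Lemma bsum (V : nmodType) (F : {set 'I_m} -> V) :
  \sum_(i : voters bprof) F (ballot i) = \sum_(c : 'I_m) F (blk c) *+ v c.
Proof.
rewrite /= /bballot.
rewrite -(big_seq_fsetE _ _ xpredT (fun j => F (blk (nth x0 bxs j)))).
rewrite (perm_big _ (seq_fset_perm _ _)) undup_id ?iota_uniq //.
have -> : \sum_(j <- iota 0 (size bxs)) F (blk (nth x0 bxs j)) = \sum_(x <- bxs) F (blk x) by rewrite (big_nth x0) /index_iota subn0.
rewrite /bxs big_flatten big_map /= big_enum /=.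
by apply: eq_bigr => c _; rewrite big_nseq iter_addr_0.
Qed.

Lemma bpartition : party_list_wrt bprof (preim_partition lab [set: 'I_m]).
Proof.
split; first exact: preim_partitionP.
move=> i; rewrite /= /bballot /blk; apply: imset_f; by rewrite inE.
Qed.

Lemma blk_eq c x : (blk c == blk x) = (lab c == lab x).
Proof.
apply/eqP/eqP => [h|h]; last by apply/setP => y; rewrite !inE h.
by have := blk_self x; rewrite -h !inE => /eqP.
Qed.

Lemma bsupport x : party_support bprof (blk x) = (\sum_(c | lab c == lab x) v c)%N.
Proof.
rewrite /party_support cardsE -sum1_card big_mkcond /=.
have := bsum (fun Q => ((Q == blk x) : nat)). rewrite /= => ->.
rewrite [RHS]big_mkcond /=; apply: eq_bigr => c _; rewrite blk_eq.
by case: (lab c == lab x); rewrite ?natn ?mul0rn.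
Qed.
Lemma bscore (s : nat -> Rdefinitions.R) W :
  thiele_score s bprof W = \sum_(c : 'I_m) s #|blk c :&: W| *+ v c.
Proof. exact: (bsum (fun Q => s #|Q :&: W|)). Qed.

Lemma bviol (k : nat) (s : nat -> Rdefinitions.R)
  (Hex : excellence (fun A : profile m => thiele_outcome k s A)) a d (W0 : {set 'I_m}) :
  #|W0| = k -> blk a \subset W0 -> ~~ (blk d \subset W0) ->
  (\sum_(c | lab c == lab a) v c < \sum_(c | lab c == lab d) v c)%N ->
  (forall W : {set 'I_m}, #|W| = k -> \sum_(c : 'I_m) s #|blk c :&: W| *+ v c <=
                          \sum_(c : 'I_m) s #|blk c :&: W0| *+ v c) -> False.
Proof.
move=> cW0 sa sd lt hW.
have W0in : W0 \in thiele_outcome k s bprof.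
  rewrite inE cW0 eqxx /=; apply/forallP => W; apply/implyP => /eqP cW.
  by rewrite !bscore; apply: hW.
have := Hex bprof _ bpartition W0 W0in (blk a) (blk d).
rewrite !bsupport => H.
have Pa : blk a \in preim_partition lab [set: 'I_m] by apply: imset_f; rewrite inE.
have Pd : blk d \in preim_partition lab [set: 'I_m] by apply: imset_f; rewrite inE.
by move: sd; rewrite (H Pa Pd lt sa).
Qed.
End Build.

Lemma card_lt m k : (k <= m)%N -> #|[set c : 'I_m | (c < k)%N]| = k.
Proof.
move=> h.
have -> : [set c : 'I_m | (c < k)%N] = widen_ord h @: [set: 'I_k].
  apply/setP => c; rewrite inE; apply/idP/imsetP => [ck|[i _ ->]] /=; last by [].
  by exists (Ordinal ck); rewrite ?inE //; apply: ord_inj.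
by rewrite card_imset ?cardsT ?card_ord //; by move=> i j /(congr1 val) /= e; apply: ord_inj.
Qed.

Lemma card1I (T : finType) (c : T) (W : {set T}) : #|[set c] :&: W| = (c \in W).
Proof.
case: (boolP (c \in W)) => h.
  by rewrite (setIidPl _) ?cards1 // sub1set.
rewrite (_ : _ :&: _ = set0) ?cards0 //; apply/setP => y; rewrite !inE.
by apply/andP => -[/eqP -> ]; apply/negP.
Qed.

Lemma blk_single m (lab : 'I_m -> nat) c :
  (forall y, lab y = lab c -> y = c) -> blk lab c = [set c].
Proof.
move=> h; apply/setP => y; rewrite !inE /=.
by apply/idP/eqP => [/eqP e|->//]; apply: h.
Qed.

Section C1.
Local Open Scope ring_scope.
Variables (m k : nat) (hk1 : (1 <= k)%N) (hkm : (k <= m - 1)%N).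
Variables (s : nat -> Rdefinitions.R) (s0 : s 0%N = 0)
  (Hex : excellence (fun A : profile m => thiele_outcome k s A)).

Lemma km : (k < m)%N.
Proof. lia. Qed.

Lemma C1 p n : (1 <= p <= k)%N ->
  (forall q, (q <= p)%N -> s q *+ n + s 1 *+ n.+1 *+ (k - q) <=
                           s p *+ n + s 1 *+ n.+1 *+ (k - p)) -> False.
Proof.
move=> /andP[p1 pk] Hn.
have m0 : (0 < m)%N by apply: leq_ltn_trans km.
pose c0 := Ordinal m0. pose dk := Ordinal km.
pose lab := fun c : 'I_m => if (c < p)%N then 0%N else c.+1.
pose v := fun c : 'I_m => if c == c0 then n else if (c < p)%N then 0%N else n.+1.
have vdk : v dk = n.+1.
  rewrite /v; case: eqP => [/(congr1 val)/= k0|_]; first by move: hk1; rewrite k0.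
  by rewrite ltnNge pk.
have hv : (0 < size (bxs v))%N by apply: (bxs_pos (c := dk)); rewrite vdk.
pose S := [set c : 'I_m | (c < p)%N].
have blk0 : blk lab c0 = S.
  by apply/setP => y; rewrite !inE /lab /= p1; case: ltnP.
have blkd : forall c : 'I_m, (p <= c)%N -> blk lab c = [set c].
  move=> c pc; apply: blk_single => y; rewrite /lab (leqNgt p c) in pc *.
  rewrite (negbTE pc); case: ltnP => // _ [] e; exact: ord_inj.
pose W0 := [set c : 'I_m | (c < k)%N].
have cS : #|S| = p by apply: card_lt; apply: leq_trans pk (ltnW km).
have score : forall W : {set 'I_m}, #|W| = k ->
   \sum_(c : 'I_m) s #|blk lab c :&: W| *+ v c =
   s #|S :&: W| *+ n + s 1 *+ n.+1 *+ (k - #|S :&: W|).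
  move=> W cW; rewrite (bigD1 c0) //= blk0 {1}/v eqxx; congr (_ + _).
  pose F := fun c : 'I_m => if (p <= c)%N && (c \in W) then s 1 *+ n.+1 else 0.
  transitivity (\sum_(c | c != c0) F c).
    apply: eq_bigr => c cc0; rewrite /F /v (negbTE cc0); case: ltnP => cp.
      by rewrite mulr0n.
    by rewrite blkd // card1I; case: (c \in W); rewrite ?s0 ?mul0rn.
  have -> : \sum_(c | c != c0) F c = \sum_c F c.
    by rewrite [RHS](bigD1 c0) //= {2}/F leqNgt p1 /= add0r.
  rewrite -big_mkcond /= sumr_const; congr (_ *+ _).
  rewrite setIC -cW -cardsD; apply: eq_card => c; rewrite !inE /= -leqNgt.
  by [].
apply: (@bviol m lab v c0 hv k s Hex c0 dk W0).
- by apply: card_lt; apply: ltnW km.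
- by rewrite blk0; apply/subsetP => y; rewrite !inE => yp; exact: leq_trans yp pk.
- rewrite blkd ?pk // sub1set inE /= ltnn //.
- have labc0 : lab c0 = 0%N by rewrite /lab /= p1.
  have labdk : lab dk = k.+1 by rewrite /lab /= ltnNge pk.
  rewrite (bigD1 c0) ?eqxx //= big1 ?addn0; last first.
    move=> c /andP[]; rewrite labc0 /lab /v; case: ltnP => //= cp _ /negbTE ->.
    by [].
  rewrite (bigD1 dk) ?eqxx //= big1 ?addn0; last first.
    move=> c /andP[]; rewrite labdk /lab; case: ltnP => //= cp /eqP [] e.
    by case/eqP; apply: ord_inj.
  by rewrite vdk /v eqxx.
- move=> W cW; rewrite !score ?card_lt ?(ltnW km) //.
  have -> : S :&: W0 = S by apply/setIidPl/subsetP => y; rewrite !inE => yp; exact: leq_trans yp pk.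
  rewrite cS; apply: Hn; rewrite (leq_trans (subset_leq_card (subsetIl _ _))) ?cS //.
Qed.

Lemma C2 y N n : (2 <= y <= k)%N ->
  (forall u e t : nat, (u <= k - y)%N -> (e <= 1)%N -> (u + e + t = k)%N ->
     s 1 *+ N *+ u + s 1 *+ n *+ e + s t *+ n.+1 <=
     s 1 *+ N *+ (k - y) + s 1 *+ n + s y.-1 *+ n.+1) -> False.
Proof.
move=> /andP[y2 yk] Hn.
set a := (k - y)%N in Hn.
have am : (a < m)%N by have := km; rewrite /a; lia.
have a1m : (a.+1 < m)%N by have := km; rewrite /a; lia.
pose A := Ordinal am. pose D := Ordinal a1m. pose dk := Ordinal km.
pose lab := fun c : 'I_m => if (a < c)%N then 0%N else c.+1.
pose v := fun c : 'I_m => if (c < a)%N then N else if c == A then n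
                          else if c == D then n.+1 else 0%N.
have DA : (D == A) = false by apply/negbTE/eqP => /(congr1 val) /=; lia.
have vD : v D = n.+1 by rewrite /v /= ltnNge leqnSn /= DA eqxx.
have vA : v A = n by rewrite /v /= ltnn eqxx.
have hv : (0 < size (bxs v))%N by apply: (bxs_pos (c := D)); rewrite vD.
pose T := [set c : 'I_m | (c < a)%N].
pose Pj := [set c : 'I_m | (a < c)%N].
have blkD : blk lab D = Pj.
  by apply/setP => c; rewrite !inE /lab /= ltnSn; case: ltnP.
have blkA : blk lab A = [set A].
  apply: blk_single => c; rewrite /lab /= ltnn; case: ltnP => // _ [] e; exact: ord_inj.
have blkT : forall c : 'I_m, (c < a)%N -> blk lab c = [set c].
  move=> c ca; apply: blk_single => c'; rewrite /lab (ltnNge a c) (ltnW ca) /=.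
  case: ltnP => // _ [] e; exact: ord_inj.
have dec : forall W : {set 'I_m}, #|W| = (#|W :&: T| + (A \in W) + #|Pj :&: W|)%N.
  move=> W; rewrite -(cardsID T W) -addnA; congr (_ + _)%N.
  rewrite (cardsD1 A) !inE /= ltnn /=; congr (_ + _)%N.
  apply: eq_card => c; rewrite !inE -!(inj_eq val_inj) /= -ltnNge.
  by case: (c \in W); rewrite ?andbF ?andbT // ltnS; case: ltngtP.
pose W0 := [set c : 'I_m | (c < k)%N].
have AW0 : A \in W0 by rewrite inE /= /a; lia.
have TW0 : W0 :&: T = T.
  by apply/setIidPr/subsetP => c; rewrite !inE /a; lia.
have cW0 : #|W0| = k by apply: card_lt; apply: ltnW km.
have cT : #|T| = a by apply: card_lt; apply: ltnW am.
have PW0 : #|Pj :&: W0| = y.-1.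
  by have := dec W0; rewrite cW0 TW0 cT AW0 /a; lia.
have score : forall W : {set 'I_m},
   \sum_(c : 'I_m) s #|blk lab c :&: W| *+ v c =
   s 1 *+ N *+ #|W :&: T| + s 1 *+ n *+ (A \in W) + s #|Pj :&: W| *+ n.+1.
  move=> W.
  pose H1 := fun c : 'I_m => if (c < a)%N && (c \in W) then s 1 *+ N else 0.
  pose H2 := fun c : 'I_m => if c == A then s 1 *+ n *+ (A \in W) else 0.
  pose H3 := fun c : 'I_m => if c == D then s #|Pj :&: W| *+ n.+1 else 0.
  transitivity (\sum_c (H1 c + H2 c + H3 c)).
    apply: eq_bigr => c _; rewrite /H1 /H2 /H3.
    case: (ltnP c a) => [ca|ac].
      have cA : (c == A) = false by apply/negbTE/eqP => /(congr1 val) /=; lia.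
      have cD : (c == D) = false by apply/negbTE/eqP => /(congr1 val) /=; lia.
      rewrite cA cD blkT // card1I /v ca /= !addr0.
      by case: (c \in W); rewrite ?s0 ?mul0rn.
    case: eqP => [->|cA].
      rewrite eq_sym DA blkA card1I vA /= addr0 add0r.
      by case: (A \in W); rewrite ?s0 ?mul0rn ?mulr1n.
    case: eqP => [->|cD].
      by rewrite blkD vD /= !add0r.
    rewrite /v ltnNge ac /=.
    by case: eqP => // _; case: eqP => // _; rewrite mulr0n !addr0.
  rewrite !big_split /=; congr (_ + _ + _).
  - rewrite -big_mkcond /= sumr_const; congr (_ *+ _).
    by apply: eq_card => c; rewrite !inE andbC.
  - by rewrite -big_mkcond /= big_pred1_eq.
  - by rewrite -big_mkcond /= big_pred1_eq.
apply: (@bviol m lab v A hv k s Hex A D W0).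
- exact: cW0.
- by rewrite blkA sub1set.
- rewrite blkD; apply/subsetPn; exists dk; rewrite !inE /= ?ltnn //.
  by rewrite /a; lia.
- rewrite (bigD1 A) ?eqxx //= big1 ?addn0; last first.
    move=> c /andP[]; rewrite /lab /= ltnn; case: ltnP => // ac [] e.
    by move: e; rewrite eqSS => /eqP e /eqP []; apply: ord_inj.
  rewrite (bigD1 D) //= big1 ?addn0; last first.
    move=> c /andP[]; rewrite /lab /= ltnSn; case: ltnP => // ac _ cD.
    by rewrite /v ltnNge (ltnW ac) /= (negbTE cD); case: eqP => // cA; move: ac; rewrite cA /= ltnn.
  by rewrite vA vD.
- move=> W cW; rewrite !score TW0 cT AW0 PW0 /=; apply: Hn.
  + by rewrite -cT subset_leq_card // subsetIr.
  + by case: (A \in W).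
  + by rewrite -dec.
Qed.

Variable smono : forall x y : nat, (x <= y <= k)%N -> s x <= s y.

Lemma s_nneg x : (x <= k)%N -> 0 <= s x.
Proof. by move=> xk; rewrite -s0; apply: smono; rewrite leq0n. Qed.

Lemma s1_pos : 0 < s 1.
Proof.
have s1n : 0 <= s 1 by apply: s_nneg.
rewrite lt_def s1n andbT; apply/negP => /eqP s10.
apply: (C1 (p := 1) (n := 1)); first by rewrite leqnn hk1.
move=> q; rewrite leq_eqVlt ltnS leqn0 => /orP[] /eqP ->; first by rewrite lexx.
by rewrite s0 s10 !mul0rn !addr0.
Qed.

Lemma s_le p : (p <= k)%N -> s p <= s 1 *+ p.
Proof.
elim: p {-2}p (leqnn p) => [|P IH] p; first by rewrite leqn0 => /eqP ->; rewrite s0 mulr0n.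
rewrite leq_eqVlt ltnS => /orP[/eqP ->|]; last exact: IH.
move=> Pk; have IHq : forall q, (q <= P)%N -> s q <= s 1 *+ q.
  by move=> q qP; apply: IH => //; apply: leq_trans qP (ltnW Pk).
rewrite leNgt; apply/negP => hlt.
set g := s P.+1 - s 1 *+ P.+1.
have g0 : 0 < g by rewrite subr_gt0.
have s1p := s1_pos.
have x0 : 0 <= s 1 *+ P.+1 / g by apply: divr_ge0; [apply: mulrn_wge0; exact: ltW | exact: ltW].
have := archi_boundP x0; set n := Num.Def.archi_bound _ => hn.
have hng : s 1 *+ P.+1 < n%:R * g by rewrite -ltr_pdivrMr.
apply: (C1 (p := P.+1) (n := n)); first by rewrite Pk.
move=> q; rewrite leq_eqVlt ltnS => /orP[/eqP ->|qP]; first by rewrite lexx.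
have hq := IHq q qP.
have mrn : forall (x : Rdefinitions.R) (j : nat), x *+ j = x * j%:R.
  by move=> x j; rewrite mulr_natr.
rewrite -!mulrnA (mrn (s q)) (mrn (s P.+1)) !(mrn (s 1)) !natrM.
rewrite !natrB ?(leq_trans qP (ltnW Pk)) ?(ltnW Pk) //.
have hQP : (q%:R + 1 <= P.+1%:R :> Rdefinitions.R) by rewrite natr1 ler_nat ltnS.
have hN : 0 <= n%:R :> Rdefinitions.R by rewrite ler0n.
have hQ : 0 <= q%:R :> Rdefinitions.R by rewrite ler0n.
have hq' : s q <= s 1 * q%:R by rewrite mulr_natr.
rewrite /g (mrn (s 1)) in hng.
rewrite -[n.+1%:R]natr1.
move: (s q) (s 1) (s P.+1) (q%:R) (P.+1%:R) (n%:R) (k%:R) hng s1p hQP hN hQ hq'.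
move=> a b c Q Pr N K h1 h2 h3 h4 h5 h6.
have h7 : N * a <= N * (b * Q) by apply: ler_wpM2l.
have h8 : 0 <= b * Q by apply: mulr_ge0 => //; apply: ltW.
lra.
Qed.


Lemma s_ge y : (y <= k)%N -> s 1 *+ y <= s y.
Proof.
have mrn : forall (x : Rdefinitions.R) (j : nat), x *+ j = x * j%:R.
  by move=> x j; rewrite mulr_natr.
elim: y => [|y IH] Yk; first by rewrite s0 mulr0n.
case: y IH Yk => [|y] IH Yk; first by rewrite mulr1n.
have yk : (y.+1 <= k)%N by apply: ltnW.
have sy : s y.+1 = s 1 *+ y.+1 by apply/eqP; rewrite eq_le s_le // IH.
rewrite leNgt; apply/negP => hlt.
set d := s y.+2 - s y.+1.
have d0 : 0 <= d by rewrite subr_ge0; apply: smono; rewrite leqnSn Yk.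
have s1p := s1_pos.
have h0 : 0 < s 1 - d by move: hlt; rewrite /d sy mulrSr; lra.
have x0 : 0 <= d / (s 1 - d) by apply: divr_ge0 => //; apply: ltW.
have := archi_boundP x0; set n := Num.Def.archi_bound _ => hn.
have hnd : d < n%:R * (s 1 - d) by rewrite -ltr_pdivrMr.
have syn : 0 <= s y.+1 by apply: s_nneg.
apply: (C2 (y := y.+2) (N := (n.+1 * k)%N) (n := n)); first by rewrite Yk.
move=> u e t hu he hs /=.
have tk : (t <= k)%N by rewrite -hs leq_addl.
have st : s t <= s 1 * t%:R by rewrite mulr_natr; apply: s_le.
have hn0 : 0 <= n%:R :> Rdefinitions.R by rewrite ler0n.
rewrite -!mulrnA !(mrn (s 1)) (mrn (s t)) (mrn (s y.+1)) !natrM -[n.+1%:R]natr1.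
case: (ltnP u (k - y.+2)) => [ult|uge].
  have hU : (u%:R + 1 <= (k - y.+2)%:R :> Rdefinitions.R) by rewrite natr1 ler_nat.
  have hT : (t%:R <= k%:R :> Rdefinitions.R) by rewrite ler_nat.
  have hE : (e%:R <= 1 :> Rdefinitions.R) by rewrite -[1]/(1%:R) ler_nat.
  have hK : (0 <= k%:R :> Rdefinitions.R) by rewrite ler0n.
  have hT0 : (0 <= t%:R :> Rdefinitions.R) by rewrite ler0n.
  move: (s 1) (s t) (s y.+1) (u%:R) (e%:R) (t%:R) (k%:R) ((k - y.+2)%:R) (n%:R) s1p st syn hU hT hE hn0 hK hT0.
  move=> b c w U E T K A N hb hc hw hU hT hE hN hK hT0.
  have e1 : 0 <= b * ((N + 1) * K) * (A - U - 1).
    by apply: mulr_ge0; [apply: mulr_ge0; [exact: ltW|apply: mulr_ge0; lra]|lra].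
  have e2 : c * (N + 1) <= b * K * (N + 1).
    apply: ler_wpM2r; first lra.
    by apply: le_trans hc _; apply: ler_wpM2l => //; exact: ltW.
  have e3 : b * N * E <= b * N.
    by rewrite -[X in _ <= X]mulr1; apply: ler_wpM2l => //; apply: mulr_ge0 => //; exact: ltW.
  have e4 : 0 <= w * (N + 1) by apply: mulr_ge0 => //; lra.
  lra.
have ua : u = (k - y.+2)%N by apply/eqP; rewrite eqn_leq hu uge.
rewrite -ua.
case: e he hs => [|[|//]] _ hs.
  have -> : t = y.+2 by move: hs; rewrite ua; lia.
  have -> : s y.+2 = d + s y.+1 by rewrite /d subrK.
  rewrite mulr0 mulr0.
  lra.
have -> : t = y.+1 by move: hs; rewrite ua; lia.
rewrite mulr1; lra.
Qed.

Lemma s_lin x : (x <= k)%N -> s x = s 1 *+ x.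
Proof. by move=> xk; apply/eqP; rewrite eq_le s_le // s_ge. Qed.
End C1.
Section Fin.
Local Open Scope ring_scope.

Lemma thiele_ne m k (s : nat -> Rdefinitions.R) (A : profile m) :
  (k <= m)%N -> thiele_outcome k s A != set0.
Proof.
move=> km.
have P0 : (fun W : {set 'I_m} => #|W| == k) [set c : 'I_m | (c < k)%N].
  by rewrite /= card_lt.
case: (@arg_maxP _ _ _ _ (fun W : {set 'I_m} => #|W| == k) (thiele_score s A) P0) => W PW HW.
apply/set0Pn; exists W; rewrite inE PW /=; apply/forallP => W'; apply/implyP => h.
exact: HW.
Qed.
End Fin.


Lemma cardI_sum (T : finType) (b X : {set T}) :
  #|b :&: X| = (\sum_x ((x \in b) && (x \in X)))%N.
Proof.
rewrite -sum1_card big_mkcond /=; apply: eq_bigr => x _; rewrite !inE.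
by case: (_ && _).
Qed.

Lemma swap_card (T : finType) (b W : {set T}) c d :
  c \notin W -> d \in W ->
  (#|b :&: (c |: (W :\ d))| + (d \in b) = #|b :&: W| + (c \in b))%N.
Proof.
move=> cW dW.
have E : forall e : T, (e \in b : nat) = (\sum_x ((x \in b) && (x == e)))%N.
  move=> e; rewrite (bigD1 e) //= eqxx andbT big1 ?addn0 // => x /negbTE ->.
  by rewrite andbF.
rewrite !cardI_sum !E -!big_split /=; apply: eq_bigr => x _; rewrite !inE.
have cd : c != d by apply: contraNneq cW => ->.
case: (eqVneq x c) => [->|xc].
  by rewrite (negbTE cd) (negbTE cW) andbT !andbF addn0.
case: (eqVneq x d) => [->|xd].
  by rewrite dW; case: (d \in b).
by [].
Qed.

Lemma same_block m (P : {set {set 'I_m}}) (B1 B2 : {set 'I_m}) x :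
  trivIset P -> B1 \in P -> B2 \in P -> x \in B1 -> x \in B2 -> B1 = B2.
Proof.
by move=> tP h1 h2 x1 x2; rewrite -(def_pblock tP h1 x1) (def_pblock tP h2 x2).
Qed.

Section AVS.
Local Open Scope ring_scope.
Lemma av_score m (A : profile m) W :
  thiele_score (fun x : nat => x%:R) A W = (\sum_(i : voters A) #|ballot i :&: W|)%:R.
Proof. by rewrite /thiele_score natr_sum. Qed.

Lemma av_excellence m k : excellence (AV m k).
Proof.
move=> A P [hP hb] W WinAV Pi Pj Pi_in Pj_in lt PiW.
apply/negPn/negP => /subsetPn [c cPj cW].
have /and3P [_ tP P0] := hP.
have /set0Pn [d dPi] : Pi != set0 by apply: contraNneq P0 => <-.
have dW : d \in W by apply: (subsetP PiW).
move: WinAV; rewrite inE => /andP[/eqP cardW /forallP HW].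
pose W' := c |: (W :\ d).
have cW' : #|W'| = k.
  by rewrite cardsU1 !inE (negbTE cW) andbF /= -cardW (cardsD1 d W) dW add1n.
have := implyP (HW W') (introT eqP cW'); rewrite !av_score ler_nat.
have sw := fun i : voters A => swap_card (ballot i) cW dW.
have sup : forall (Q : {set 'I_m}) e, Q \in P -> e \in Q ->
    (\sum_(i : voters A) (e \in ballot i))%N = party_support A Q.
  move=> Q e QP eQ; rewrite /party_support -sum1_card [RHS]big_mkcond /=.
  apply: eq_bigr => i _; rewrite inE; case: (boolP (e \in ballot i)) => h.
    by rewrite (same_block tP (hb i) QP h eQ) eqxx.
  by case: eqP => // E; move: h; rewrite E eQ.
have key : (\sum_(i : voters A) #|ballot i :&: W'| + \sum_(i : voters A) (d \in ballot i)
   = \sum_(i : voters A) #|ballot i :&: W| + \sum_(i : voters A) (c \in ballot i))%N.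
  by rewrite -!big_split; apply: eq_bigr => i _; exact: sw i.
move: key; rewrite (sup _ _ Pi_in dPi) (sup _ _ Pj_in cPj).
by move: lt; lia.
Qed.
End AVS.

Section Final.
Local Open Scope ring_scope.
Lemma score_lin m k (s : nat -> Rdefinitions.R) (A : profile m) (X : {set 'I_m}) :
  (forall x, (x <= k)%N -> s x = s 1 *+ x) -> #|X| = k ->
  thiele_score s A X = s 1 * thiele_score (fun x : nat => x%:R) A X.
Proof.
move=> lin cX; rewrite /thiele_score mulr_sumr; apply: eq_bigr => i _.
by rewrite lin ?mulr_natr // -cX subset_leq_card // subsetIr.
Qed.
End Final.

Theorem proposition1 (m k : nat) (hk1 : (1 <= k)%N) (hkm : (k <= m - 1)%N) :
  is_thiele_rule k (AV m k) /\ excellence (AV m k) /\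
  forall f : rule m, is_thiele_rule k f -> excellence f ->
    forall A : profile m, f A = AV m k A.
Proof.
have kmm : (k < m)%N by lia.
split; [|split].
- split.
    move=> A; split; first exact: thiele_ne (ltnW kmm).
    by move=> W; rewrite inE => /andP[/eqP].
  exists (fun x : nat => (x%:R)%R); split; first by [].
  split; last by [].
  by move=> x y /andP[xy _]; rewrite ler_nat.
- exact: av_excellence.
move=> f [abc [s [s0 [smono fs]]]] Hexf A.
have Hex : excellence (fun A : profile m => thiele_outcome k s A).
  by move=> B P hp W; rewrite -fs; exact: Hexf B P hp W.
have lin := s_lin hk1 hkm s0 Hex smono.
have s1p := s1_pos hk1 hkm s0 Hex smono.
rewrite fs /AV; apply/setP => W; rewrite !inE.
case hW: (#|W| == k) => //=; apply: eq_forallb => W'.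
case hW': (#|W'| == k) => //=.
by rewrite !(score_lin A lin) ?(eqP hW) ?(eqP hW') // ler_pM2l.
Qed.
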